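(* Let $\alpha\in\{0,1\}^n$ with $|\alpha|=k$, let $u_1<\dots<u_k$ be the positions of its ones, and let $\lambda_\alpha$ be the partition whose conjugate is $\lambda'_\alpha=(\lambda'_1,\dots,\lambda'_k)$ with $\lambda'_j=n-k-u_j+j$. Then, as polynomials, $$s_{\lambda_\alpha}(x_1,\dots,x_{n-k})=\det\big(e_{n-k+i-u_j}(x_1,\dots,x_{n-k})\big)_{i,j=1}^k=\det\big(e_{n-k+i-u_j}(x_1,\dots,x_{n-k+i-1})\big)_{i,j=1}^k .$$
   Context: $s_\lambda(x_1,\dots,x_m)$ is the Schur polynomial of the partition $\lambda$ in $m$ variables; $e_r(y_1,\dots,y_m)$ is the $r$-th elementary symmetric polynomial, with $e_0=1$, $e_r=0$ for $r<0$ or $r>m$. Note $\lambda'_j$ is the number of zeros of $\alpha$ to the right of its $j$-th one. *)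

(* Defs.v *)
From HB Require Import structures.
From mathcomp Require Import all_boot all_order all_algebra.
Set Implicit Arguments. Unset Strict Implicit. Unset Printing Implicit Defensive.
Import Order.TTheory GRing.Theory Num.Theory.
Local Open Scope ring_scope.

(* Variables are an infinite family x : nat -> R; x_{t+1} is (x t). *)

Definition esym (R : comPzRingType) (m r : nat) (x : nat -> R) : R :=
  \sum_(S : {set 'I_m} | #|S| == r) \prod_(i in S) x (val i).

Definition esymD (R : comPzRingType) (m a b : nat) (x : nat -> R) : R :=
  if (b <= a)%N then esym m (a - b) x else 0.

(* Partition lam : seq nat (weakly decreasing); cell (i,j) (0-indexed) is in
   the Young diagram iff j < lam_i. *)
Definition in_diag (lam : seq nat) (i j : nat) : bool := (j < nth 0%N lam i)%N.

(* Semistandard Young tableau with entries in {1..m}, encoded as a filling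
   T : 'I_(size lam) * 'I_(head 0 lam) -> 'I_m.+1 where 0 marks a cell
   outside the diagram and entry e >= 1 inside. *)
Definition is_ssyt (lam : seq nat) (m : nat)
   (T : {ffun 'I_(size lam) * 'I_(head 0%N lam) -> 'I_m.+1}) : bool :=
  [forall c : 'I_(size lam) * 'I_(head 0%N lam),
     (in_diag lam c.1 c.2 == (0 < T c)%N)] &&
  [forall c : 'I_(size lam) * 'I_(head 0%N lam),
   forall d : 'I_(size lam) * 'I_(head 0%N lam),
     (in_diag lam c.1 c.2 && in_diag lam d.1 d.2) ==>
     ((((c.1 == d.1 :> nat) && (c.2.+1 == d.2 :> nat)) ==> (T c <= T d)%N) &&
      (((c.1.+1 == d.1 :> nat) && (c.2 == d.2 :> nat)) ==> (T c < T d)%N))].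

Definition schur (R : comPzRingType) (lam : seq nat) (m : nat) (x : nat -> R) : R :=
  \sum_(T | @is_ssyt lam m T)
     \prod_(c : 'I_(size lam) * 'I_(head 0%N lam) | in_diag lam c.1 c.2)
        x (T c).-1.

Definition conj_part (s : seq nat) : seq nat :=
  mkseq (fun i => count (fun l => (i < l)%N) s) (\max_(l <- s) l)%N.

Definition ones_pos (alpha : seq bool) : seq nat :=
  [seq i.+1 | i <- iota 0 (size alpha) & nth false alpha i].

Definition lam_conj (alpha : seq bool) : seq nat :=
  let n := size alpha in let k := count id alpha in
  [seq ((n - k + j.+1) - nth 0%N (ones_pos alpha) j)%N | j <- iota 0 k].

Definition lam_alpha (alpha : seq bool) : seq nat := conj_part (lam_conj alpha).

(* Main.v *)
Require Import Defs.
From HB Require Import structures.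
From mathcomp Require Import all_boot all_order all_algebra.
From mathcomp Require Import zify perm.
Set Implicit Arguments. Unset Strict Implicit. Unset Printing Implicit Defensive.
Import Order.TTheory GRing.Theory Num.Theory.

Lemma cnt_prefix (f : nat -> nat) k i j :
  (forall j, j.+1 < k -> f j.+1 <= f j) ->
  (j < count (fun l => i < l) (map f (iota 0 k))) = (j < k) && (i < f j).
Proof.
elim: k j => [|k IH] j hd; first by rewrite /= ltn0.
have mono : forall a, a <= k -> f k <= f a.
  move=> a ak; elim: k {IH} hd a ak => [|k' IH'] hd a ak.
    by have -> : a = 0 by lia.
  case: (ltnP a k'.+1) => h.
    apply: (leq_trans (hd k' (ltnSn _))); apply: IH' => //.
    by move=> j0 j0k; apply: hd; lia.
  by have -> : a = k'.+1 by lia.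
rewrite -(addn1 k) iotaD map_cat count_cat /= addn0 add0n.
case: (ltnP i (f k)) => ik /=.
  have -> : count (fun l => i < l) (map f (iota 0 k)) = k.
    apply/eqP; rewrite -[X in _ == X](size_iota 0 k) -(size_map f) -all_count.
    apply/allP => l /mapP[a]; rewrite mem_iota => /andP[_ ak] ->.
    by apply: (leq_trans ik); apply: mono; lia.
  case: (ltnP j (k + 1)) => jk /=; last by [].
  by symmetry; apply: (leq_trans ik); apply: mono; lia.
rewrite addn0 IH; last by move=> j0 j0k; apply: hd; lia.
case: (ltnP j k) => jk /=.
  by rewrite (_ : j < k + 1) //; lia.
case: (ltnP j (k+1)) => jk1 /=; last by [].
have -> : j = k by lia.
by rewrite ltnNge ik.
Qed.

Lemma sorted_bound (s : seq nat) n :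
  sorted ltn s -> all (fun v => v <= n) s ->
  forall j, j < size s -> nth 0 s j + size s - j <= n + 1.
Proof.
elim: s => [|a s IH] //= srt /andP[an alls] j js.
have srt' : sorted ltn s by move: srt; case: s {IH alls js} => //= b s /andP[].
case: j js => [|j] js /=.
  case: s srt srt' alls IH {js} => [|b s] /= srt srt' alls IH; first by lia.
  move: srt => /andP[ab _].
  have := IH srt' alls 0 (ltn0Sn _); rewrite /=; lia.
have := IH srt' alls j js; lia.
Qed.



Local Open Scope ring_scope.

Section Esym.
Variable R : comPzRingType.
Variable x : nat -> R.

Lemma esym0 m : Defs.esym m 0 x = 1.
Proof.
rewrite /Defs.esym (big_pred1 set0) ?big_set0 // => S /=.
by rewrite cards_eq0.
Qed.

Lemma esym_0S r : Defs.esym 0 r.+1 x = 0.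
Proof.
rewrite /Defs.esym big_pred0 // => S; apply/negbTE.
apply/negP => /eqP E; have := max_card (pred_of_set S).
by rewrite card_ord E.
Qed.

Definition wid m (S : {set 'I_m}) : {set 'I_m.+1} :=
  [set widen_ord (leqnSn m) i | i in S].
Definition nar m (S : {set 'I_m.+1}) : {set 'I_m} :=
  [set i : 'I_m | widen_ord (leqnSn m) i \in S].

Lemma wid_inj m : injective (widen_ord (leqnSn m)).
Proof. by move=> a b /(congr1 val) /= /val_inj. Qed.

Lemma narK m (S : {set 'I_m}) : nar (wid S) = S.
Proof.
by apply/setP => i; rewrite !inE mem_imset //; apply: wid_inj.
Qed.

Lemma notmax_wid m (S : {set 'I_m}) : ord_max \notin wid S.
Proof.
apply/imsetP => -[i _] /(congr1 val) /= E.
by move: (ltn_ord i); rewrite -E ltnn.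
Qed.

Lemma widK m (S : {set 'I_m.+1}) : ord_max \notin S -> wid (nar S) = S.
Proof.
move=> nS; apply/setP => i; apply/imsetP/idP => [[j] | iS].
  by rewrite inE => jS ->.
have lim : (i < m)%N.
  rewrite ltn_neqAle -ltnS ltn_ord andbT; apply/eqP => E.
  have Ei : i = ord_max by apply: val_inj.
  by move: nS; rewrite -Ei iS.
exists (Ordinal lim); first by rewrite inE; have -> : widen_ord (leqnSn m) (Ordinal lim) = i by apply: val_inj.
by apply: val_inj.
Qed.

Lemma card_wid m (S : {set 'I_m}) : #|wid S| = #|S|.
Proof. by rewrite card_imset //; apply: wid_inj. Qed.

Lemma prod_wid m (S : {set 'I_m}) :
  \prod_(i in wid S) x (val i) = \prod_(i in S) x (val i).
Proof. by rewrite big_imset //= => a b _ _; apply: wid_inj. Qed.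

Lemma esym_rec m r : Defs.esym m.+1 r.+1 x = Defs.esym m r.+1 x + x m * Defs.esym m r x.
Proof.
rewrite /Defs.esym (bigID (fun S : {set 'I_m.+1} => ord_max \in S)) /= addrC.
congr (_ + _).
  rewrite (reindex_onto (@wid m) (@nar m)) /=; last first.
    by move=> S /andP[_ nS]; rewrite widK.
  apply: eq_big => [S|S _]; last by rewrite prod_wid.
  by rewrite narK eqxx card_wid notmax_wid !andbT.
rewrite big_distrr /=.
rewrite (reindex_onto (fun S => ord_max |: @wid m S) (@nar m)) /=; last first.
  move=> S /andP[_ mS]; rewrite -[RHS](setD1K mS); congr (_ |: _).
  apply/setP => i; apply/imsetP/idP => [[j] | ].
    rewrite inE => jS ->; rewrite !inE jS andbT; apply/eqP => /(congr1 val) /= E.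
    by move: (ltn_ord j); rewrite E ltnn.
  rewrite !inE => /andP[ne iS].
  have lim : (i < m)%N.
    rewrite ltn_neqAle -ltnS ltn_ord andbT; apply/eqP => E.
    have Ei : i = ord_max by apply: val_inj.
    by move: ne; rewrite Ei eqxx.
  exists (Ordinal lim); last by apply: val_inj.
  by rewrite inE; have -> : widen_ord (leqnSn m) (Ordinal lim) = i by apply: val_inj.
apply: eq_big => [S|S _].
  rewrite setU11 andbT cardsU1 notmax_wid card_wid add1n eqSS.
  have -> : nar (ord_max |: wid S) = S.
    apply/setP => i; rewrite !inE mem_imset; last exact: wid_inj.
    suff -> : (widen_ord (leqnSn m) i == ord_max) = false by [].
    by apply/eqP => /(congr1 val) /= E; move: (ltn_ord i); rewrite E ltnn.
  by rewrite eqxx andbT.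
by rewrite big_setU1 ?notmax_wid //= prod_wid.
Qed.

End Esym.

Section Det.
Variable R : comPzRingType.
Variable x : nat -> R.

Definition Ez m (z : int) : R :=
  match z with Posz r => Defs.esym m r x | Negz _ => 0 end.

Lemma Ez_rec m z : Ez m.+1 z = Ez m z + x m * Ez m (z - 1).
Proof.
case: z => [[|r]|r] /=.
- by rewrite !esym0 mulr0 addr0.
- rewrite esym_rec.
  by rewrite subn1.
- by rewrite mulr0 addr0.
Qed.

Lemma prod_if_scale k (S : {set 'I_k}) (a : R) (f g : 'I_k -> R) :
  \prod_i (if i \in S then a * f i else g i) =
  a ^+ #|S| * \prod_i (if i \in S then f i else g i).
Proof.
rewrite (bigID (mem S)) /= [in RHS](bigID (mem S)) /= mulrA.
congr (_ * _); last by apply: eq_bigr => i /negbTE ->.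
rewrite -prodr_const -big_split /=; apply: eq_bigr => i iS.
by rewrite iS.
Qed.

Lemma det_split k (A B : 'M[R]_k) (a : R) :
  \det (\matrix_(i, j) (a * B i j + A i j)) =
  \sum_(S : {set 'I_k}) a ^+ #|S| *
     \det (\matrix_(i, j) (if j \in S then B i j else A i j)).
Proof.
have E1 : forall S : {set 'I_k}, \det (\matrix_(i, j) (if j \in S then B i j else A i j)) =
   \sum_(s : 'S_k) (-1) ^+ s * \prod_i (if i \in S then B (s i) i else A (s i) i).
  move=> S; rewrite -det_tr /determinant; apply: eq_bigr => s _; congr (_ * _).
  by apply: eq_bigr => i _; rewrite !mxE.
under [RHS]eq_bigr => S _ do rewrite E1.
rewrite -det_tr /determinant.
transitivity (\sum_(s : 'S_k) (-1) ^+ s * \sum_(S : {set 'I_k})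
     \prod_i (if i \in S then a * B (s i) i else A (s i) i)).
  apply: eq_bigr => s _; congr (_ * _); rewrite -bigA_distr.
  by apply: eq_bigr => i _; rewrite !mxE.
under [RHS]eq_bigr => S _ do rewrite big_distrr /=.
rewrite [RHS]exchange_big /=; apply: eq_bigr => s _.
rewrite big_distrr /=; apply: eq_bigr => S _.
rewrite (prod_if_scale S a (fun i => B (s i) i) (fun i => A (s i) i)).
by rewrite mulrCA.
Qed.

Definition Dm k m (c : nat -> nat) : R :=
  \det (\matrix_(i < k, j < k) Ez m (i%:Z + (c j)%:Z - j%:Z)).

Definition dn k (S : {set 'I_k}) (j : nat) : bool := [exists j' in S, val j' == j].

Lemma dnE k (S : {set 'I_k}) (j : 'I_k) : dn S j = (j \in S).
Proof.
apply/existsP/idP => [[j'] /andP[jS /eqP E]|jS]; last by exists j; rewrite jS eqxx.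
by have <- : j' = j by apply: val_inj.
Qed.

Lemma dn_out k (S : {set 'I_k}) (j : nat) : (k <= j)%N -> dn S j = false.
Proof.
move=> kj; apply/existsP => -[j'] /andP[_ /eqP E].
by move: (ltn_ord j'); rewrite E ltnNge kj.
Qed.

Definition allowed k (c : nat -> nat) (S : {set 'I_k}) : bool :=
  [forall j : 'I_k, (j \in S) ==>
     ((0 < c j)%N && ((j.+1 < k)%N ==> ((c j.+1 < c j)%N || dn S j.+1)))].

Lemma det_col0 k (M : 'M[R]_k) (j : 'I_k) : (forall i, M i j = 0) -> \det M = 0.
Proof.
move=> H; rewrite -det_tr (expand_det_row _ j) big1 // => i _.
by rewrite mxE H mul0r.
Qed.

Lemma det_col_eq k (M : 'M[R]_k) (j1 j2 : 'I_k) :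
  j1 != j2 -> (forall i, M i j1 = M i j2) -> \det M = 0.
Proof.
move=> ne H; rewrite -det_tr (determinant_alternate ne) // => i.
by rewrite !mxE.
Qed.

Lemma Ez_neg m (z : int) : (z < 0)%R -> Ez m z = 0.
Proof. by case: z. Qed.

Lemma Dm_rec k m (c : nat -> nat) :
  (forall j, (j.+1 < k)%N -> (c j.+1 <= c j)%N) ->
  Dm k m.+1 c = \sum_(S : {set 'I_k} | allowed c S)
                  x m ^+ #|S| * Dm k m (fun j => c j - dn S j)%N.
Proof.
move=> dec.
rewrite /Dm.
set A := \matrix_(i < k, j < k) Ez m (i%:Z + (c j)%:Z - j%:Z).
set B := \matrix_(i < k, j < k) Ez m (i%:Z + (c j)%:Z - j%:Z - 1).
rewrite (_ : \matrix_(i < k, j < k) Ez m.+1 (i%:Z + (c j)%:Z - j%:Z) =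
  \matrix_(i, j) (x m * B i j + A i j)); last first.
  by apply/matrixP => i j; rewrite !mxE Ez_rec addrC.
rewrite det_split (bigID (allowed c)) /= [X in _ + X]big1 ?addr0; last first.
  move=> S nal; rewrite [\det _](_ : _ = 0) ?mulr0 //.
  set M := \matrix_(i, j) _.
  have colB : forall j0 : 'I_k, j0 \in S -> (j0.+1 < k)%N -> ~~ (c j0.+1 < c j0)%N ->
      ~~ dn S j0.+1 -> \det M = 0.
    move=> j0 j0S lt nlt ndn; pose j' := Ordinal lt.
    apply: (@det_col_eq _ _ j0 j'); first by rewrite -val_eqE /= ltn_eqF.
    have j'S : (j' \in S) = false by rewrite -dnE; exact: negbTE ndn.
    have e : c j0.+1 = c j0 by apply/eqP; rewrite eqn_leq dec // leqNgt.
    move=> i; rewrite !mxE j0S j'S /= e; congr Ez; lia.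
  case: (boolP [exists j0 : 'I_k, [&& j0 \in S, (j0.+1 < k)%N, ~~ (c j0.+1 < c j0)%N &
                                        ~~ dn S j0.+1]]).
    by case/existsP => j0 /and4P[j0S lt nlt ndn]; apply: (colB j0).
  move=> noB.
  have noB' : forall j0 : 'I_k, j0 \in S -> (j0.+1 < k)%N -> ~~ (c j0.+1 < c j0)%N ->
      dn S j0.+1.
    move=> j0 j0S lt nlt; case E: (dn S j0.+1) => //.
    by move/existsPn: noB => /(_ j0); rewrite j0S lt nlt E.
  have lastE : forall t (j : 'I_k), (j + t)%N = k.-1 -> j \in S -> c j = 0 ->
      exists jl : 'I_k, [/\ jl.+1 = k, jl \in S & c jl = 0].
    elim => [|t IH] j jt jS cj0.
      by exists j; split => //; move: (ltn_ord j); rewrite addn0 in jt; lia.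
    have lt : (j.+1 < k)%N by move: (ltn_ord j); lia.
    pose j' := Ordinal lt.
    have j'S : j' \in S by rewrite -dnE; apply: noB' => //; rewrite cj0.
    apply: (IH j') => //=; first by rewrite -jt addSnnS.
    by move: (dec j lt); rewrite cj0; lia.
  move/forallPn: nal => [j]; rewrite negb_imply => /andP[jS H].
  case: (posnP (c j)) => cj.
    have [jl [jlk jlS cjl]] := lastE (k.-1 - j)%N j ltac:(move: (ltn_ord j); lia) jS cj.
    apply: (@det_col0 _ _ jl) => i; rewrite !mxE jlS cjl; apply: Ez_neg.
    move: (ltn_ord i); lia.
  move: H; rewrite cj /= negb_imply => /andP[lt]; rewrite negb_or => /andP[nlt ndn].
  exact: (colB j).
apply: eq_bigr => S al; congr (_ * _); congr (\det _); apply/matrixP => i j.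
rewrite !mxE -dnE; case: ifP => jS; last by rewrite subn0.
move/forallP: al => /(_ j); rewrite -dnE jS /= => /andP[cpos _].
congr Ez; rewrite -(subzn cpos); lia.
Qed.

End Det.

Section Shift.
Variable R : comPzRingType.
Variable x : nat -> R.

Lemma esymD_Ez m a b : esymD m a b x = Ez x m (a%:Z - b%:Z).
Proof.
rewrite /esymD; case: leqP => ba; first by rewrite subzn.
by rewrite Ez_neg // subr_lt0 ltz_nat.
Qed.

Definition Ms k m s (w : 'I_k -> int) : 'M[R]_k :=
  \matrix_(i, j) Ez x (m + minn i s) (i%:Z + w j).

Lemma Ms_step k m s w : \det (Ms m s.+1 w) = \det (@Ms k m s w).
Proof.
pose L : 'M[R]_k := \matrix_(i, j)
   ((i == j)%:R + (if (s < i)%N && (j.+1 == i) then x (m + s) else 0)).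
have -> : Ms m s.+1 w = L *m Ms m s w.
  apply/matrixP => i j; rewrite !mxE.
  under eq_bigr => l _ do rewrite !mxE mulrDl.
  rewrite big_split /=.
  rewrite (bigD1 i) //= eqxx mul1r big1 ?addr0; last first.
    by move=> l /negbTE; rewrite eq_sym => ->; rewrite mul0r.
  case: (ltnP s i) => si /=; last first.
    rewrite big1 ?addr0; last by move=> l _; rewrite mul0r.
    by rewrite (_ : minn i s.+1 = i) //; lia.
  have i0 : (i.-1 < k)%N by move: (ltn_ord i); lia.
  rewrite (bigD1 (Ordinal i0)) //= big1 ?addr0; last first.
    move=> l /eqP ne; case: eqP => [E|_]; last by rewrite mul0r.
    exfalso; apply: ne; apply: val_inj => /=; lia.
  have -> : (i.-1.+1 == i) = true by apply/eqP; lia.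
  rewrite /=.
  have -> : minn i s.+1 = (s.+1) by lia.
  have -> : minn i.-1 s = s by lia.
  rewrite addnS Ez_rec; congr (_ + _ * Ez x _ _).
  rewrite predn_int; last by move: si; case: (nat_of_ord i).
  by rewrite addrAC.
rewrite det_mulmx det_trig ?big1 ?mul1r //.
  by move=> i _; rewrite !mxE eqxx (gtn_eqF (ltnSn i)) andbF addr0.
apply/is_trig_mxP => i j ij; rewrite !mxE.
have -> : (i == j) = false by rewrite -val_eqE /= ltn_eqF.
by rewrite (gtn_eqF (ltn_trans ij (ltnSn j))) andbF addr0.
Qed.

Lemma det_shift k m (w : 'I_k -> int) :
  \det (\matrix_(i < k, j < k) Ez x (m + i) (i%:Z + w j)) =
  \det (\matrix_(i < k, j < k) Ez x m (i%:Z + w j)).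
Proof.
have E : forall s, \det (@Ms k m s w) = \det (Ms m 0 w).
  by elim => // s IH; rewrite Ms_step.
have := E k; rewrite /Ms.
have -> : \matrix_(i < k, j < k) Ez x (m + minn i k) (i%:Z + w j) =
          \matrix_(i < k, j < k) Ez x (m + i) (i%:Z + w j).
  by apply/matrixP => i j; rewrite !mxE (minn_idPl (ltnW (ltn_ord i))).
move=> ->; congr (\det _); apply/matrixP => i j; rewrite !mxE.
by rewrite minn0 addn0.
Qed.

End Shift.

Section G.
Variable R : comPzRingType.
Variable x : nat -> R.
Variables nr nc : nat.

Local Notation cell := ('I_nr * 'I_nc)%type.

Definition inD (c : nat -> nat) (p : cell) : bool := (p.1 < c p.2)%N.

Definition ssytG m (c : nat -> nat) (T : {ffun cell -> 'I_m.+1}) : bool :=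
  [forall p : cell, (inD c p == (0 < T p)%N)] &&
  [forall p : cell, forall q : cell,
     (inD c p && inD c q) ==>
     ((((p.1 == q.1 :> nat) && (p.2.+1 == q.2 :> nat)) ==> (T p <= T q)%N) &&
      (((p.1.+1 == q.1 :> nat) && (p.2 == q.2 :> nat)) ==> (T p < T q)%N))].

Definition wt m (c : nat -> nat) (T : {ffun cell -> 'I_m.+1}) : R :=
  \prod_(p | inD c p) x (T p).-1.

Definition G m (c : nat -> nat) : R := \sum_(T | @ssytG m c T) wt c T.

Lemma ssytP m c (T : {ffun cell -> 'I_m.+1}) : reflect
 [/\ (forall p, inD c p = (0 < T p)%N),
  (forall p q, inD c p -> inD c q -> p.1 = q.1 :> nat -> (p.2).+1 = q.2 :> nat ->
      (T p <= T q)%N) &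
  (forall p q, inD c p -> inD c q -> (p.1).+1 = q.1 :> nat -> p.2 = q.2 :> nat ->
      (T p < T q)%N)]
 (ssytG c T).
Proof.
apply: (iffP andP) => [[/forallP H1 /forallP H2] | [H1 H2 H3]]; split.
- by move=> p; exact: (eqP (H1 p)).
- move=> p q pD qD e1 e2; move/forallP: (H2 p) => /(_ q).
  by rewrite pD qD e1 e2 !eqxx /= => /andP[].
- move=> p q pD qD e1 e2; move/forallP: (H2 p) => /(_ q).
  by rewrite pD qD e1 e2 !eqxx /= => /andP[].
- by apply/forallP => p; rewrite H1.
- apply/forallP => p; apply/forallP => q; apply/implyP => /andP[pD qD].
  apply/andP; split; apply/implyP => /andP[/eqP e1 /eqP e2].
    exact: H2.
  exact: H3.
Qed.

Variable k : nat.
Hypothesis nck : (nc <= k)%N.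

Definition shape_ok (c : nat -> nat) :=
  [/\ forall j, (c j.+1 <= c j)%N, forall j, (c j <= nr)%N & forall j, (nc <= j)%N -> c j = 0%N].

Section Rec.
Variable m : nat.
Variable c : nat -> nat.
Hypothesis hc : shape_ok c.

Definition dT (T : {ffun cell -> 'I_m.+2}) : {set 'I_k} :=
  [set j : 'I_k | [exists p : cell, (nat_of_ord p.2 == nat_of_ord j) && (nat_of_ord (T p) == m.+1)]].

Lemma lt_c_nc (j : nat) : (0 < c j)%N -> (j < nc)%N.
Proof. by case: hc => _ _ h0 cj; rewrite ltnNge; apply/negP => /h0; lia. Qed.

Lemma bot (T : {ffun cell -> 'I_m.+2}) p :
  ssytG c T -> nat_of_ord (T p) = m.+1 -> (p.1).+1 = c p.2.
Proof.
case/ssytP => H1 _ H3 Tp.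
have pD : inD c p by rewrite H1 Tp.
have pD' : (p.1.+1 <= c p.2)%N := pD.
apply/eqP; rewrite eqn_leq pD' /= leqNgt; apply/negP => lt.
case: hc => _ hR _.
have lt' : (p.1.+1 < nr)%N by apply: (leq_trans lt); apply: hR.
pose q : cell := (Ordinal lt', p.2).
have qD : inD c q by [].
have := H3 p q pD qD erefl erefl; rewrite Tp.
by move: (ltn_ord (T q)); lia.
Qed.

Definition bS (S : {set 'I_k}) (p : cell) : bool := ((p.1).+1 == c p.2) && dn S p.2.

Lemma in_dT (T : {ffun cell -> 'I_m.+2}) (j : 'I_k) :
  (j \in dT T) = [exists p : cell, (nat_of_ord p.2 == nat_of_ord j) && (nat_of_ord (T p) == m.+1)].
Proof. by rewrite inE. Qed.

Lemma Ubot (T : {ffun cell -> 'I_m.+2}) p :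
  ssytG c T -> (nat_of_ord (T p) == m.+1) = bS (dT T) p.
Proof.
move=> sT; apply/eqP/andP => [Tp | [/eqP pb /existsP[j' /andP[j'S /eqP ej]]]].
  split; first by rewrite (bot sT Tp).
  apply/existsP; exists (widen_ord nck p.2); rewrite eqxx andbT in_dT.
  by apply/existsP; exists p; rewrite eqxx Tp eqxx.
move: j'S; rewrite in_dT => /existsP[q /andP[/eqP eq2 /eqP Tq]].
have := bot sT Tq; rewrite eq2 ej -pb => /eqP; rewrite eqSS => /eqP eq1.
have -> : p = q.
  case: p q eq1 eq2 ej {pb Tq sT} => [p1 p2] [q1 q2] /= e1 e2 e3.
  by congr pair; apply: val_inj => /=; congruence.
by [].
Qed.

Lemma allowedP S (j : 'I_k) : allowed c S -> j \in S ->
  (0 < c j)%N /\ ((j.+1 < k)%N -> (c j.+1 < c j)%N \/ dn S j.+1).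
Proof.
move/forallP => /(_ j) /implyP H /H /andP[-> /implyP H2]; split => // jk.
by move/orP: (H2 jk) => [] ->; [left|right].
Qed.

Lemma dT_allowed (T : {ffun cell -> 'I_m.+2}) : ssytG c T -> allowed c (dT T).
Proof.
move=> sT; apply/forallP => j; apply/implyP; rewrite in_dT.
move=> /existsP[p /andP[/eqP e2 /eqP Tp]].
have pb := bot sT Tp.
case/ssytP: (sT) => H1 H2 _.
apply/andP; split; first by rewrite -e2 -pb.
apply/implyP => jk; apply/orP; case: (ltnP (c j.+1) (c j)) => [lt|le]; [by left | right].
have cp : (0 < c p.2)%N by rewrite -pb.
rewrite e2 in cp.
have j1C : (j.+1 < nc)%N by apply: lt_c_nc; apply: (leq_trans cp le).
pose q : cell := (p.1, Ordinal j1C).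
have pD : inD c p by rewrite H1 Tp.
have qD : inD c q.
  rewrite /inD /=; apply: (leq_trans _ le); rewrite -e2 -pb; exact: leqnn.
have e2' : (p.2).+1 = q.2 :> nat by rewrite /= e2.
have := H2 p q pD qD erefl e2'; rewrite Tp => le2.
have Tq : nat_of_ord (T q) = m.+1 by move: (ltn_ord (T q)); lia.
apply/existsP; exists (Ordinal jk); rewrite /= eqxx andbT in_dT.
by apply/existsP; exists q; rewrite /= eqxx Tq eqxx.
Qed.

Definition ext (S : {set 'I_k}) (T' : {ffun cell -> 'I_m.+1}) : {ffun cell -> 'I_m.+2} :=
  [ffun p => if bS S p then ord_max else widen_ord (leqnSn _) (T' p)].
Definition restr (T : {ffun cell -> 'I_m.+2}) : {ffun cell -> 'I_m.+1} :=
  [ffun p => inord (if nat_of_ord (T p) == m.+1 then 0%N else nat_of_ord (T p))].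
Definition csub (S : {set 'I_k}) (j : nat) : nat := (c j - dn S j)%N.

Lemma inD_csub S p : inD (csub S) p = inD c p && ~~ bS S p.
Proof.
rewrite /inD /csub /bS; case: (dn S p.2) => /=; last by rewrite subn0 ?andbF ?andbT.
rewrite ?andbT; apply/idP/andP => [h|[h1 /eqP h2]]; last by lia.
by split; [lia | apply/eqP; lia].
Qed.

Lemma restr_val (T : {ffun cell -> 'I_m.+2}) p :
  nat_of_ord (restr T p) = if nat_of_ord (T p) == m.+1 then 0%N else nat_of_ord (T p).
Proof.
rewrite ffunE inordK //; case: eqP => // ne; move: (ltn_ord (T p)); lia.
Qed.

Lemma ext_val S T' p : nat_of_ord (ext S T' p) = if bS S p then m.+1 else nat_of_ord (T' p).
Proof. by rewrite ffunE; case: ifP. Qed.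

Lemma bS_inD S p : bS S p -> inD c p.
Proof. by case/andP => /eqP h _; rewrite /inD -h. Qed.

Lemma ext_ssyt S T' : allowed c S -> ssytG (csub S) T' -> ssytG c (ext S T').
Proof.
move=> al /ssytP[H1 H2 H3]; apply/ssytP; split.
- move=> p; rewrite ext_val; case bp: (bS S p); first by rewrite (bS_inD bp).
  by rewrite -H1 inD_csub bp andbT.
- move=> p q pD qD e1 e2; rewrite !ext_val.
  case bq: (bS S q); first by case: (bS S p) => //; move: (ltn_ord (T' p)); lia.
  case bp: (bS S p).
    exfalso; move: bp => /andP[/eqP pb pS].
    have jS : widen_ord nck p.2 \in S by rewrite -dnE.
    have jk : ((widen_ord nck p.2).+1 < k)%N.
      by rewrite /= e2; apply: (leq_trans (ltn_ord q.2)).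
    have [_ /(_ jk)] := allowedP al jS; rewrite /= => -[lt | dS].
      have : (q.1 < c q.2)%N := qD.
      by rewrite -e2 -e1; lia.
    move/negbT: bq; rewrite /bS negb_and -e2 dS orbF -e1 pb.
    have : (q.1 < c q.2)%N := qD.
    case: hc => hd _ _; move: (hd p.2); rewrite -e2 -e1; lia.
  by apply: H2 => //; rewrite inD_csub ?pD ?qD ?bp ?bq.
- move=> p q pD qD e1 e2; rewrite !ext_val.
  case bp: (bS S p).
    exfalso; move: bp => /andP[/eqP pb _].
    have : (q.1 < c q.2)%N := qD.
    by rewrite -e2 -e1 pb ltnn.
  case bq: (bS S q); first by move: (ltn_ord (T' p)).
  by apply: H3 => //; rewrite inD_csub ?pD ?qD ?bp ?bq.
Qed.

Lemma cell_of S (j : 'I_k) : allowed c S -> j \in S ->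
  exists p : cell, bS S p /\ nat_of_ord p.2 = nat_of_ord j.
Proof.
move=> al jS; have [cj _] := allowedP al jS.
have jC := lt_c_nc cj.
case: hc => _ hR _.
have iR : ((c j).-1 < nr)%N by move: (hR j); lia.
exists (Ordinal iR, Ordinal jC); split => //.
apply/andP; split => /=; first by apply/eqP; lia.
by rewrite /= dnE.
Qed.

Lemma dT_ext S T' : allowed c S -> ssytG (csub S) T' -> dT (ext S T') = S.
Proof.
move=> al sT'; apply/setP => j; rewrite in_dT; apply/existsP/idP.
  move=> [p /andP[/eqP e2 /eqP v]]; move: v; rewrite ext_val.
  case bp: (bS S p); last by move: (ltn_ord (T' p)); lia.
  move=> _; move: bp => /andP[_ /existsP[j' /andP[j'S /eqP ej]]].
  by have <- : j' = j by apply: val_inj; rewrite ej.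
move=> jS; have [p [bp e]] := cell_of al jS.
by exists p; rewrite e eqxx ext_val bp eqxx.
Qed.

Lemma restr_ext S T' : ssytG (csub S) T' -> restr (ext S T') = T'.
Proof.
move=> /ssytP[H1 _ _]; apply/ffunP => p; apply: val_inj => /=.
rewrite restr_val ext_val; case bp: (bS S p); rewrite ?eqxx.
  have := H1 p; rewrite inD_csub bp andbF => /esym.
  by case: (T' p) => -[].
by case: eqP => // e; move: (ltn_ord (T' p)); lia.
Qed.

Lemma ext_restr T : ssytG c T -> ext (dT T) (restr T) = T.
Proof.
move=> sT; apply/ffunP => p; apply: val_inj => /=.
rewrite ext_val -Ubot // restr_val; case: eqP => //.
Qed.

Lemma restr_ssyt T : ssytG c T -> ssytG (csub (dT T)) (restr T).
Proof.
move=> sT; have U := fun p => Ubot p sT; case/ssytP: (sT) => H1 H2 H3; apply/ssytP; split.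
- move=> p; rewrite inD_csub -U restr_val; case: eqP => Tp; first by rewrite andbF.
  by rewrite andbT H1.
- move=> p q; rewrite !inD_csub -!U => /andP[pD /negbTE bp] /andP[qD /negbTE bq] e1 e2.
  by rewrite !restr_val bp bq; apply: H2.
- move=> p q; rewrite !inD_csub -!U => /andP[pD /negbTE bp] /andP[qD /negbTE bq] e1 e2.
  by rewrite !restr_val bp bq; apply: H3.
Qed.

Lemma card_bS S : allowed c S -> #|[set p | bS S p]| = #|S|.
Proof.
move=> al.
rewrite -(@card_in_imset _ _ (fun p : cell => widen_ord nck p.2)); last first.
  move=> p q; rewrite !inE => /andP[/eqP pb _] /andP[/eqP qb _] /(congr1 val) /= e.
  have e2 : p.2 = q.2 by apply: val_inj.
  case: p q pb qb e e2 => [p1 p2] [q1 q2] /= pb qb _ e2.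
  by congr pair; apply: val_inj => /=; move: pb qb; rewrite e2; lia.
congr #|pred_of_set _|; apply/setP => j; apply/imsetP/idP.
  move=> [p]; rewrite inE => /andP[_ dp] ->.
  by rewrite -dnE.
move=> jS; have [p [bp e]] := cell_of al jS.
by exists p; rewrite ?inE //; apply: val_inj.
Qed.

Lemma wt_ext S T' : allowed c S ->
  wt c (ext S T') = x m ^+ #|S| * wt (csub S) T'.
Proof.
move=> al; rewrite /wt (bigID (bS S)) /=; congr (_ * _).
  rewrite -(card_bS al) -prodr_const.
  apply: eq_big => p; first by rewrite inE; case: (boolP (bS S p)) => [/bS_inD -> |]; rewrite ?andbF.
  by move=> /andP[_ bp]; rewrite ext_val bp.
apply: eq_big => p; first by rewrite inD_csub.
by move=> /andP[_ /negbTE bp]; rewrite ext_val bp.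
Qed.

Lemma G_rec : G m.+1 c =
  \sum_(S : {set 'I_k} | allowed c S) x m ^+ #|S| * G m (csub S).
Proof.
rewrite /G (partition_big dT (allowed c)); last exact: dT_allowed.
apply: eq_bigr => S al.
rewrite (reindex_onto (ext S) restr); last first.
  by move=> T /andP[sT /eqP <-]; rewrite ext_restr.
rewrite big_distrr /=; apply: eq_big => T'; last first.
  by move=> _; rewrite wt_ext.
case: (boolP (ssytG (csub S) T')) => sT'.
  by rewrite ext_ssyt // dT_ext // restr_ext // !eqxx.
apply/negbTE; apply/negP => /andP[/andP[sU /eqP dU] /eqP rU].
move/negP: sT'; apply; rewrite -rU -[X in csub X]dU.
exact: restr_ssyt.
Qed.

Lemma shape_csub S : allowed c S -> shape_ok (csub S).
Proof.
move=> al; case: hc => hd hR h0; split.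
- move=> j; rewrite /csub.
  case: (ltnP j.+1 k) => jk.
    case dj: (dn S j); last by move: (hd j); lia.
    move: dj => /existsP[j' /andP[j'S /eqP ej]].
    have ej' : nat_of_ord j' = j := ej.
    have [cp H] := allowedP al j'S; rewrite ej' in cp H.
    case: (H jk) => [lt | ->] /=; first by case: (dn S j.+1) => /=; lia.
    by move: (hd j); lia.
  by rewrite dn_out // h0 //; apply: (leq_trans nck); lia.
- by move=> j; rewrite /csub; move: (hR j); lia.
- by move=> j jn; rewrite /csub h0.
Qed.

End Rec.
Lemma shape_zero c : shape_ok c -> c 0%N = 0%N -> forall j, c j = 0%N.
Proof.
case=> hd _ _ c0; elim => // j IH; move: (hd j); rewrite IH; lia.
Qed.

Lemma G0 c : shape_ok c -> G 0 c = (c 0%N == 0%N)%:R.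
Proof.
move=> hc; rewrite /G.
case: (posnP (c 0%N)) => c0.
  have z := shape_zero hc c0.
  pose T0 : {ffun cell -> 'I_1} := [ffun _ => ord0].
  rewrite (big_pred1 T0); first by rewrite /wt big_pred0 // => p; rewrite /inD z.
  move=> T; have -> : T = T0.
    by apply/ffunP => p; rewrite ffunE; apply: val_inj; case: (T p) => -[].
  rewrite /= eqxx; apply/ssytP; split => [p|p q|p q]; rewrite /inD ?z //.
  by rewrite ffunE.
rewrite big_pred0 // => T.
have n0 : (0 < nc)%N by apply: (lt_c_nc hc).
have r0 : (0 < nr)%N by case: hc => _ hR _; apply: (leq_trans c0 (hR 0%N)).
apply/negP => /ssytP[H1 _ _].
have := H1 (Ordinal r0, Ordinal n0); rewrite /inD /= c0.
by case: (T _) => -[].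
Qed.

Lemma D0 c : shape_ok c -> Dm x k 0 c = (c 0%N == 0%N)%:R.
Proof.
move=> hc; rewrite /Dm.
case: (posnP (c 0%N)) => c0.
  have z := shape_zero hc c0; rewrite -(det1 R k); congr (\det _).
  apply/matrixP => i j; rewrite !mxE z addr0.
  case: (ltngtP i j) => h.
  - rewrite Ez_neg; last by rewrite subr_lt0 ltz_nat.
    by rewrite (_ : (i == j) = false) //; apply/negbTE; rewrite -val_eqE /= ltn_eqF.
  - rewrite (_ : (i == j) = false); last by apply/negbTE; rewrite -val_eqE /= gtn_eqF.
    rewrite subzn ?(ltnW h) //.
    have -> : (i - j = (i - j).-1.+1)%N by lia.
    by rewrite /= esym_0S.
  - have -> : i = j by apply: val_inj.
    by rewrite eqxx subrr /= esym0.

have n0 : (0 < nc)%N by apply: (lt_c_nc hc).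
have k0 : (0 < k)%N by apply: leq_trans nck.
rewrite /= ?mulr0n (det_col0 (j := Ordinal k0)) // => i; rewrite !mxE /= addn0.
have -> : (i + c 0%N = (i + c 0%N).-1.+1)%N by lia.
by rewrite esym_0S.
Qed.

Lemma G_D m c : shape_ok c -> G m c = Dm x k m c.
Proof.
elim: m c => [|m IH] c hc; first by rewrite G0 // D0.
rewrite G_rec // Dm_rec; last by case: hc => hd _ _ j _; apply: hd.
apply: eq_bigr => S al; rewrite IH //; exact: shape_csub.
Qed.

End G.

Theorem lemma3p8 (R : comPzRingType) (n : nat) (alpha : seq bool)
    (Hsize : size alpha = n) (x : nat -> R) :
  let k := count id alpha in
  let u := ones_pos alpha in
  schur (lam_alpha alpha) (n - k) x =
    \det (\matrix_(i < k, j < k)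
            esymD (n - k) (n - k + i.+1) (nth 0%N u j) x)
  /\
  \det (\matrix_(i < k, j < k)
            esymD (n - k) (n - k + i.+1) (nth 0%N u j) x) =
    \det (\matrix_(i < k, j < k)
            esymD (n - k + i) (n - k + i.+1) (nth 0%N u j) x).
Proof.
move=> k u.
have su : size u = k.
  rewrite /u /ones_pos size_map size_filter /k.
  by rewrite -[in RHS](mkseq_nth false alpha) /mkseq count_map.
have srt : sorted ltn u.
  rewrite /u /ones_pos sorted_map; apply: (sorted_filter ltn_trans).
  exact: iota_ltn_sorted.
have alln : all (fun v => (v <= n)%N) u.
  apply/allP => v /mapP[i]; rewrite mem_filter mem_iota => /andP[_ /andP[_ h]] ->.
  by rewrite -Hsize; lia.
have kn : (k <= n)%N by rewrite -Hsize /k count_size.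
set m := (n - k)%N.
have ub : forall j, (j < k)%N -> (nth 0 u j <= m + j.+1)%N.
  move=> j jk; have := sorted_bound srt alln (j:=j); rewrite su => /(_ jk).
  rewrite /m; lia.
have ult : forall j, (j.+1 < k)%N -> (nth 0 u j < nth 0 u j.+1)%N.
  move=> j jk; apply: (sorted_ltn_nth ltn_trans) => //; rewrite inE su //; lia.
pose f j := (m + j.+1 - nth 0 u j)%N.
have lcE : lam_conj alpha = map f (iota 0 k).
  by rewrite /lam_conj Hsize.
pose c j := nth 0%N (lam_conj alpha) j.
have cE : forall j, c j = if (j < k)%N then f j else 0%N.
  move=> j; rewrite /c lcE; case: ltnP => h.
    by rewrite (nth_map 0%N) ?size_iota // nth_iota.
  by rewrite nth_default // size_map size_iota.
have fdec : forall j, (j.+1 < k)%N -> (f j.+1 <= f j)%N.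
  move=> j jk; have := ult j jk; have := ub j.+1 jk; rewrite /f; lia.
have cnt := cnt_prefix _ _ fdec.
set lam := lam_alpha alpha.
have lamE : lam = mkseq (fun i => count (fun l => (i < l)%N) (map f (iota 0 k)))
                        (\max_(l <- map f (iota 0 k)) l).
  by rewrite /lam /lam_alpha /conj_part lcE.
have szlam : size lam = (\max_(l <- map f (iota 0 k)) l)%N by rewrite lamE size_mkseq.
have nthlam : forall i, (i < size lam)%N ->
    nth 0%N lam i = count (fun l => (i < l)%N) (map f (iota 0 k)).
  by move=> i; rewrite {1}lamE size_mkseq => h; rewrite lamE nth_mkseq.
have headlam : head 0%N lam = if (0 < size lam)%N then
    count (fun l => (0 < l)%N) (map f (iota 0 k)) else 0%N.
  case: ifP => h; first by rewrite -nthlam // nth0.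
  by move: h; case: (lam).
have nck : (head 0%N lam <= k)%N.
  rewrite headlam; case: ifP => // _.
  by rewrite -[X in (_ <= X)%N](size_iota 0 k) -(size_map f) count_size.
have hc : shape_ok (size lam) (head 0%N lam) c.
  split.
  - move=> j; rewrite !cE; case: (ltnP j.+1 k) => h1.
      by rewrite (ltnW h1) fdec.
    by [].
  - move=> j; rewrite cE; case: ltnP => // jk; rewrite szlam.
    apply: (@leq_bigmax_seq _ _ (fun _ => true) (fun l => l)) => //.
    by apply/mapP; exists j => //; rewrite mem_iota.
  - move=> j; rewrite headlam; case: ifP => h hj.
      move: hj; rewrite leqNgt cnt cE; case: (j < k)%N => //=.
      by rewrite lt0n negbK => /eqP.
    have : (c j <= size lam)%N.
      rewrite cE; case: ltnP => // jk; rewrite szlam.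
      apply: (@leq_bigmax_seq _ _ (fun _ => true) (fun l => l)) => //.
      by apply/mapP; exists j => //; rewrite mem_iota.
    move: h => /negbT; rewrite lt0n negbK => /eqP ->; lia.
have diagE : forall p : 'I_(size lam) * 'I_(head 0%N lam),
    in_diag lam p.1 p.2 = inD c p.
  move=> p; rewrite /in_diag /inD nthlam // cnt cE.
  have -> : (p.2 < k)%N by apply: leq_trans (ltn_ord p.2) nck.
  by [].
have D1 : schur lam m x = Dm x k m c.
  rewrite -(G_D x nck m hc) /schur /G.
  apply: eq_big => [T|T _].
    rewrite /is_ssyt /ssytG; congr andb.
      by apply: eq_forallb => p; rewrite diagE.
    apply: eq_forallb => p; apply: eq_forallb => q; by rewrite !diagE.
  by rewrite /wt; apply: eq_bigl => p; rewrite diagE.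
pose w (j : 'I_k) : int := (m.+1)%:Z - (nth 0%N u j)%:Z.
have M1 : \matrix_(i < k, j < k) esymD m (m + i.+1) (nth 0%N u j) x =
          \matrix_(i < k, j < k) Ez x m (i%:Z + w j).
  apply/matrixP => i j; rewrite !mxE esymD_Ez; congr Ez; rewrite /w; lia.
have M2 : \matrix_(i < k, j < k) esymD (m + i) (m + i.+1) (nth 0%N u j) x =
          \matrix_(i < k, j < k) Ez x (m + i) (i%:Z + w j).
  apply/matrixP => i j; rewrite !mxE esymD_Ez; congr Ez; rewrite /w; lia.
split; last by rewrite M1 M2 det_shift.
rewrite D1 M1 /Dm; congr (\det _); apply/matrixP => i j; rewrite !mxE.
congr Ez; rewrite /w cE ltn_ord /f.
have := ub j (ltn_ord j); lia.
Qed.
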